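(* Let $V$ be a real bounded sequence with $V_n\ge C$ for all $n\ge1$, for some $C>0$, and $n(V_{n+1}-V_n)\in\ell^1$. Let $b_n=V_n+2$, $S_n=\frac12\big(V_n+2+\sqrt{V_n(V_n+4)}\big)$, and let $z_n$, $C_z$, $\phi^\pm$, $\widetilde V$ be as defined below. Then: (a) $S_{n+1}-S_n\in\ell^1$; (b) $V_n$ converges to a nonzero limit $V_\infty$, and the infinite product defining $C_z$ converges to a finite nonzero number, so $C_z$ is well defined; (c) $z_nz_{n+1}=1/\sqrt{V_{n+1}(V_{n+1}+4)}$ and $z_m-[V_\infty(V_\infty+4)]^{-1/4}\in\ell^1$ (as a sequence in $m$); (d) $\lim_{n\to\infty}\widetilde V_n=V_\infty$, and the Green matrix $G_{mn}=\phi^+_{\min(m,n)}\phi^-_{\max(m,n)}$ of $-\Delta+\widetilde V$ and the product $\phi^+_n\phi^-_n$ are uniformly bounded; (e) $\widetilde V_n-V_n\in\ell^1$, and consequently (taking $\widetilde V$ as comparison potential) $(-\Delta+V)\psi=0$ has a solution $\psi^-$ with $\psi^-_n=\phi^-_n+r_n\max_{k\ge n}|\phi^-_k|$, where $r_n\to0$.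
   Context: $(\Delta f)_n=f_{n+1}+f_{n-1}-2f_n$; $(-\Delta+V)\psi=0$ means $-\psi_{n+1}-\psi_{n-1}+(2+V_n)\psi_n=0$. Note $b_n^2-4=V_n(V_n+4)$. Define $C_z:=\big(V_\infty(V_\infty+4)\big)^{-1/4}\prod_{m=1}^\infty\sqrt{\frac{V_{2m}(V_{2m}+4)}{V_{2m-1}(V_{2m-1}+4)}}$ and, for $n\ge1$, $z_n:=C_z^{(-1)^n}\Big(\frac{\prod_{1\le k\le n-1,\,k\equiv n-1\ (\mathrm{mod}\ 2)}(b_k^2-4)}{\prod_{1\le k\le n,\,k\equiv n\ (\mathrm{mod}\ 2)}(b_k^2-4)}\Big)^{1/2}$ (the factor alternates between $C_z$ and $C_z^{-1}$). Set $\phi^\pm_n=z_n\prod_{\ell=1}^nS_\ell^{\pm1}$ and $\widetilde V_n=\frac{z_{n+1}}{z_n}S_{n+1}+\frac{z_{n-1}}{z_nS_n}-2$ (so that $(-\Delta+\widetilde V)\phi^\pm=0$). *)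

(* Defs.v *)
From Stdlib Require Import Reals Lra.
From Coquelicot Require Import Coquelicot.
Open Scope R_scope.

(* Sequences are indexed by nat; index n corresponds to the paper's n (>= 1).
   The value at index 0 is never used by the definitions below except where noted. *)

Fixpoint prodR (f : nat -> R) (n : nat) : R :=
  match n with
  | O => 1
  | S k => prodR f k * f (S k)
  end.

(* prodPar f n = product of f k over 1 <= k <= n with k = n (mod 2) *)
Definition prodPar (f : nat -> R) (n : nat) : R :=
  prodR (fun k => if Bool.eqb (Nat.even k) (Nat.even n) then f k else 1) n.

Definition bseq (V : nat -> R) (n : nat) : R := V n + 2.

Definition Sseq (V : nat -> R) (n : nat) : R :=
  (V n + 2 + sqrt (V n * (V n + 4))) / 2.

(* V_infinity := lim V_n (as a real; part (b) asserts the limit exists). *)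
Definition Vinf (V : nat -> R) : R := real (Lim_seq V).

Definition Cz_partial (V : nat -> R) (N : nat) : R :=
  prodR (fun m => sqrt ((V (2 * m)%nat * (V (2 * m)%nat + 4)) /
                        (V (2 * m - 1)%nat * (V (2 * m - 1)%nat + 4)))) N.

Definition Cz (V : nat -> R) : R :=
  Rpower (Vinf V * (Vinf V + 4)) (- (1 / 4)) * real (Lim_seq (Cz_partial V)).

(* z_n = C_z^{(-1)^n} ( prod_{1<=k<=n-1, k = n-1 mod 2} (b_k^2-4)
                        / prod_{1<=k<=n, k = n mod 2} (b_k^2-4) )^{1/2}.
   (Used for n >= 1; at n = 0 the same formula gives z_0 = C_z.) *)
Definition zseq (V : nat -> R) (n : nat) : R :=
  (if Nat.even n then Cz V else / Cz V) *
  sqrt (prodPar (fun k => bseq V k ^ 2 - 4) (n - 1)%nat /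
        prodPar (fun k => bseq V k ^ 2 - 4) n).

Definition phiP (V : nat -> R) (n : nat) : R := zseq V n * prodR (Sseq V) n.
Definition phiM (V : nat -> R) (n : nat) : R :=
  zseq V n * prodR (fun l => / Sseq V l) n.

Definition Vtilde (V : nat -> R) (n : nat) : R :=
  zseq V (n + 1) / zseq V n * Sseq V (n + 1)
  + zseq V (n - 1)%nat / (zseq V n * Sseq V n) - 2.

Definition maxtail (f : nat -> R) (n : nat) : R :=
  real (Sup_seq (fun k => Rabs (f (n + k)%nat))).

(* Main.v *)
Require Import Defs.
From Stdlib Require Import Reals Lra Lia.
From Coquelicot Require Import Coquelicot.
Open Scope R_scope.

Fixpoint psum (u : nat -> R) (N : nat) : R :=
  match N with O => 0 | S k => psum u k + u k end.

Definition summable (u : nat -> R) : Prop :=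
  exists B, forall N, psum (fun n => Rabs (u n)) N <= B.

Lemma psum_ext u v N : (forall n, (n < N)%nat -> u n = v n) -> psum u N = psum v N.
Proof.
  induction N; simpl; intros H; auto.
  rewrite IHN by (intros; apply H; lia). rewrite H by lia. auto.
Qed.

Lemma psum_nonneg u N : (forall n, 0 <= u n) -> 0 <= psum u N.
Proof. intros H; induction N; simpl; [lra|]. specialize (H N). lra. Qed.

Lemma psum_le u v N : (forall n, u n <= v n) -> psum u N <= psum v N.
Proof. intros H; induction N; simpl; [lra|]. specialize (H N). lra. Qed.

Lemma psum_mono u N M : (forall n, 0 <= u n) -> (N <= M)%nat -> psum u N <= psum u M.
Proof.
  intros H HNM; induction HNM; [lra|]. simpl. specialize (H m). lra.
Qed.

Lemma psum_plus u v N : psum (fun n => u n + v n) N = psum u N + psum v N.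
Proof. induction N; simpl; lra. Qed.

Lemma psum_scal c u N : psum (fun n => c * u n) N = c * psum u N.
Proof. induction N; simpl; [ring|]. rewrite IHN; ring. Qed.

Lemma psum_abs_le u N : Rabs (psum u N) <= psum (fun n => Rabs (u n)) N.
Proof.
  induction N; simpl. rewrite Rabs_R0; lra.
  eapply Rle_trans. apply Rabs_triang. lra.
Qed.

Lemma psum_shift u N : psum u (S N) = u O + psum (fun n => u (S n)) N.
Proof. induction N; simpl in *; [lra|]. rewrite IHN. lra. Qed.

Lemma psum_telescope s N : psum (fun k => s (S k) - s k) N = s N - s O.
Proof. induction N; simpl; [lra|]. rewrite IHN; lra. Qed.

Lemma psum_sum_n u N : psum u (S N) = sum_n u N.
Proof.
  induction N. simpl. rewrite sum_O. lra.
  rewrite sum_Sn. change (psum u (S N) + u (S N) = plus (sum_n u N) (u (S N))).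
  rewrite IHN. reflexivity.
Qed.

Lemma summable_ex_series u : summable u -> ex_series (fun n => Rabs (u n)).
Proof.
  intros [B HB].
  assert (Hg : Un_growing (sum_n (fun n => Rabs (u n)))).
  { intro n. rewrite <- !psum_sum_n. simpl. pose proof (Rabs_pos (u (S n))). simpl in H. lra. }
  assert (Hb : has_ub (sum_n (fun n => Rabs (u n)))).
  { exists B. intros x [n ->]. rewrite <- psum_sum_n. apply HB. }
  destruct (growing_cv _ Hg Hb) as [l Hl].
  exists l. apply is_lim_seq_Reals in Hl. exact Hl.
Qed.

Lemma ex_series_summable u : ex_series (fun n => Rabs (u n)) -> summable u.
Proof.
  intros [l Hl]. exists l. intro N.
  assert (Hl' : is_lim_seq (sum_n (fun n => Rabs (u n))) l) by exact Hl.
  destruct N as [|N]. simpl.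
  - apply (is_lim_seq_le (fun _ => 0) (sum_n (fun n => Rabs (u n))) 0 l); auto.
    intro n. rewrite <- psum_sum_n. apply psum_nonneg. intro; apply Rabs_pos.
    apply is_lim_seq_const.
  - apply (is_lim_seq_le (fun _ => psum (fun n => Rabs (u n)) (S N))
       (fun k => sum_n (fun n => Rabs (u n)) (N + k)) (psum (fun n => Rabs (u n)) (S N)) l).
    + intro k. rewrite <- psum_sum_n. apply psum_mono. intro; apply Rabs_pos. lia.
    + apply is_lim_seq_const.
    + rewrite (is_lim_seq_incr_n _ N) in Hl'.
      eapply is_lim_seq_ext; [|exact Hl']. intro k; simpl. f_equal; lia.
Qed.

Lemma summable_le u v K : (forall n, Rabs (u n) <= K * Rabs (v n)) -> summable v -> summable u.
Proof.
  intros H [B HB]. exists (Rmax K 0 * B). intro N.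
  eapply Rle_trans. apply psum_le. intro n. apply (Rle_trans _ _ _ (H n)).
  apply Rmult_le_compat_r. apply Rabs_pos. apply Rmax_l.
  rewrite (psum_scal (Rmax K 0) (fun n => Rabs (v n))). apply Rmult_le_compat_l. apply Rmax_r. apply HB.
Qed.

Lemma summable_plus u v : summable u -> summable v -> summable (fun n => u n + v n).
Proof.
  intros [B1 H1] [B2 H2]. exists (B1 + B2). intro N.
  eapply Rle_trans. apply psum_le. intro; apply Rabs_triang.
  rewrite (psum_plus (fun n => Rabs (u n)) (fun n => Rabs (v n))). specialize (H1 N); specialize (H2 N); lra.
Qed.

Lemma summable_opp u : summable u -> summable (fun n => - u n).
Proof. apply summable_le with 1. intro; rewrite Rabs_Ropp; lra. Qed.

Lemma summable_minus u v : summable u -> summable v -> summable (fun n => u n - v n).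
Proof. intros; apply summable_plus; auto; apply summable_opp; auto. Qed.

Lemma summable_ext u v : (forall n, u n = v n) -> summable u -> summable v.
Proof. intros H; apply summable_le with 1. intro; rewrite H; lra. Qed.

Lemma summable_shift u : summable (fun n => u (S n)) -> summable u.
Proof.
  intros [B HB]. exists (Rabs (u O) + B). intro N. destruct N. simpl. pose proof (Rabs_pos (u O)).
  pose proof (HB O); simpl in *; lra.
  rewrite psum_shift. specialize (HB N). simpl in *. lra.
Qed.

Lemma summable_unshift u : summable u -> summable (fun n => u (S n)).
Proof.
  intros [B HB]. exists B. intro N. specialize (HB (S N)). rewrite psum_shift in HB.
  pose proof (Rabs_pos (u O)). lra.
Qed.

Lemma summable_shiftn u k : summable u -> summable (fun n => u (n + k)%nat).
Proof.
  induction k; intros H. eapply summable_ext; [|exact H]; intro; f_equal; lia.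
  apply summable_unshift in IHk; auto. eapply summable_ext; [|exact IHk]; intro; simpl; f_equal; lia.
Qed.

Lemma psum_evenodd u N : psum u (2 * N) = psum (fun n => u (2 * n)%nat) N + psum (fun n => u (2 * n + 1)%nat) N.
Proof.
  induction N. simpl; lra.
  replace (2 * S N)%nat with (S (S (2 * N))) by lia.
  change (psum u (S (S (2 * N)))) with (psum u (2 * N) + u (2 * N)%nat + u (S (2 * N))).
  rewrite IHN. cbn [psum].
  replace (S (2 * N)) with (2 * N + 1)%nat by lia. lra.
Qed.

Lemma summable_evenodd u : summable (fun n => u (2 * n)%nat) -> summable (fun n => u (2 * n + 1)%nat) -> summable u.
Proof.
  intros [B1 H1] [B2 H2]. exists (B1 + B2). intro N.
  apply Rle_trans with (psum (fun n => Rabs (u n)) (2 * N)).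
  apply psum_mono. intro; apply Rabs_pos. lia.
  rewrite (psum_evenodd (fun n => Rabs (u n))). specialize (H1 N); specialize (H2 N). lra.
Qed.

Lemma summable_bounded u : summable u -> exists B, forall n, Rabs (u n) <= B.
Proof.
  intros [B HB]. exists B. intro n. eapply Rle_trans; [|apply (HB (S n))]. simpl.
  pose proof (psum_nonneg (fun n => Rabs (u n)) n (fun _ => Rabs_pos _)). lra.
Qed.

Lemma summable_lim0 u : summable u -> is_lim_seq u 0.
Proof.
  intro H. apply summable_ex_series in H. apply ex_series_lim_0 in H.
  apply is_lim_seq_abs_0. exact H.
Qed.

Lemma summable_conv u : summable u -> exists l : R, is_lim_seq (psum u) l.
Proof.
  intro H. apply summable_ex_series, ex_series_Rabs in H. destruct H as [l Hl].
  exists l. apply is_lim_seq_incr_1. eapply is_lim_seq_ext; [|exact Hl].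
  intro n. simpl. rewrite <- psum_sum_n. reflexivity.
Qed.

Lemma lim_of_summable_diff u l : summable (fun n => u n - l) -> is_lim_seq u l.
Proof.
  intro H. apply summable_lim0 in H.
  apply is_lim_seq_plus' with (v := fun _ => l) (l2 := l) in H. 2: apply is_lim_seq_const.
  rewrite Rplus_0_l in H. eapply is_lim_seq_ext; [|exact H]. intro; simpl; lra.
Qed.

Lemma is_lim_seq_psum (f : nat -> nat -> R) (g : nat -> R) m :
  (forall N, is_lim_seq (fun K => f K N) (g N)) ->
  is_lim_seq (fun K => psum (f K) m) (psum g m).
Proof.
  intro H. induction m; simpl. apply is_lim_seq_const.
  apply is_lim_seq_plus'; auto.
Qed.

Lemma tail_ineq s K : forall m, (m <= K)%nat ->
  psum (fun N => Rabs (s (S N) - s K)) m <= psum (fun k => Rabs (INR k * (s (S k) - s k))) K.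
Proof.
  induction K; intros m Hm.
  - replace m with O by lia. simpl. lra.
  - assert (Hstep : forall m, psum (fun N => Rabs (s (S N) - s (S K))) m <=
        psum (fun N => Rabs (s (S N) - s K)) m + INR m * Rabs (s (S K) - s K)).
    { intro mm; induction mm; cbn [psum]. simpl; lra. rewrite S_INR.
      assert (Rabs (s (S mm) - s (S K)) <= Rabs (s (S mm) - s K) + Rabs (s (S K) - s K)).
      { replace (s (S mm) - s (S K)) with ((s (S mm) - s K) - (s (S K) - s K)) by ring.
        eapply Rle_trans. apply Rabs_triang. rewrite Rabs_Ropp. lra. }
      lra. }
    simpl psum at 2.
    assert (HK : Rabs (INR K * (s (S K) - s K)) = INR K * Rabs (s (S K) - s K)).
    { rewrite Rabs_mult, Rabs_pos_eq; auto. apply pos_INR. }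
    rewrite HK.
    destruct (Compare_dec.le_lt_dec m K) as [h|h].
    + eapply Rle_trans. apply Hstep. specialize (IHK m h).
      assert (INR m * Rabs (s (S K) - s K) <= INR K * Rabs (s (S K) - s K)).
      { apply Rmult_le_compat_r. apply Rabs_pos. apply le_INR; auto. }
      lra.
    + replace m with (S K) by lia. simpl psum at 1.
      replace (s (S K) - s (S K)) with 0 by ring. rewrite Rabs_R0.
      eapply Rle_trans with (psum (fun N => Rabs (s (S N) - s K)) K + INR K * Rabs (s (S K) - s K)).
      pose proof (Hstep K). lra. specialize (IHK K (le_n K)). lra.
Qed.

Lemma tail_lemma s : summable (fun k => INR k * (s (S k) - s k)) ->
  exists l : R, is_lim_seq s l /\ summable (fun n => s n - l).
Proof.
  intros Hs.
  assert (Hd : summable (fun k => s (S k) - s k)).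
  { apply summable_shift. eapply summable_le with (K := 1); [|apply summable_unshift, Hs].
    intro n. cbv beta. rewrite Rabs_mult. rewrite (Rabs_pos_eq (INR (S n))) by apply pos_INR.
    rewrite S_INR. pose proof (pos_INR n). pose proof (Rabs_pos (s (S (S n)) - s (S n))). nra. }
  destruct (summable_conv _ Hd) as [l0 Hl0].
  assert (Hl : is_lim_seq s (s O + l0)).
  { eapply is_lim_seq_ext with (u := fun N => s O + psum (fun k => s (S k) - s k) N).
    - intro N. rewrite psum_telescope. ring.
    - replace (Finite (s O + l0)) with (Finite (s O + l0)) by reflexivity.
      apply is_lim_seq_plus'; auto. apply is_lim_seq_const. }
  exists (s O + l0). split; auto.
  apply summable_shift. destruct Hs as [B HB]. exists B. intro m.
  set (g := fun K => psum (fun N => Rabs (s (S N) - s (K + m)%nat)) m).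
  assert (Hg : is_lim_seq g (psum (fun N => Rabs (s (S N) - (s O + l0))) m)).
  { unfold g. apply (is_lim_seq_psum (fun K N => Rabs (s (S N) - s (K + m)%nat))).
    intro N. apply (is_lim_seq_abs _ (Finite (s (S N) - (s O + l0)))).
    apply is_lim_seq_minus'. apply is_lim_seq_const.
    apply (is_lim_seq_incr_n s m) in Hl. eapply is_lim_seq_ext; [|exact Hl]. intro x; cbv beta; f_equal; try lia. }
  assert (Hle := is_lim_seq_le g (fun _ => B) (psum (fun N => Rabs (s (S N) - (s O + l0))) m) B).
  simpl in Hle. apply Hle; auto. 2: apply is_lim_seq_const.
  intro K. unfold g. eapply Rle_trans. apply tail_ineq. lia. apply HB.
Qed.

Definition cl (u : nat -> R) (l : R) := summable (fun n => u n - l).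

Lemma cl_bounded u l : cl u l -> exists B, forall n, Rabs (u n) <= B.
Proof.
  intro H. destruct (summable_bounded _ H) as [B HB]. exists (B + Rabs l). intro n.
  specialize (HB n). replace (u n) with ((u n - l) + l) by ring.
  eapply Rle_trans. apply Rabs_triang. lra.
Qed.

Lemma cl_lim u l : cl u l -> is_lim_seq u l.
Proof. apply lim_of_summable_diff. Qed.

Lemma cl_const l : cl (fun _ => l) l.
Proof. exists 0. intro N. right. induction N; simpl. lra. rewrite IHN. unfold Rminus; rewrite Rplus_opp_r, Rabs_R0; ring. Qed.

Lemma cl_plus u v l m : cl u l -> cl v m -> cl (fun n => u n + v n) (l + m).
Proof. intros H1 H2. eapply summable_ext; [|apply (summable_plus _ _ H1 H2)]. intro; simpl; ring. Qed.

Lemma cl_minus u v l m : cl u l -> cl v m -> cl (fun n => u n - v n) (l - m).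
Proof. intros H1 H2. eapply summable_ext; [|apply (summable_minus _ _ H1 H2)]. intro; simpl; ring. Qed.

Lemma cl_mult u v l m : cl u l -> cl v m -> cl (fun n => u n * v n) (l * m).
Proof.
  intros H1 H2. destruct (cl_bounded _ _ H1) as [B HB].
  apply summable_ext with (fun n => u n * (v n - m) + m * (u n - l)). intro; ring.
  apply summable_plus.
  - eapply summable_le with (K := B); [|exact H2]. intro n. rewrite Rabs_mult.
    apply Rmult_le_compat_r. apply Rabs_pos. auto.
  - eapply summable_le with (K := Rabs m); [|exact H1]. intro n. rewrite Rabs_mult. lra.
Qed.

Lemma cl_scal c u l : cl u l -> cl (fun n => c * u n) (c * l).
Proof. intro H. apply cl_mult; auto. apply cl_const. Qed.

Lemma cl_inv u l m0 : cl u l -> 0 < m0 -> (forall n, m0 <= Rabs (u n)) -> l <> 0 ->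
  cl (fun n => / u n) (/ l).
Proof.
  intros H Hm Hu Hl.
  eapply summable_le with (K := / (m0 * Rabs l)); [|exact H]. intro n.
  assert (Hun : u n <> 0). { intro E. specialize (Hu n). rewrite E, Rabs_R0 in Hu. lra. }
  replace (/ u n - / l) with ((l - u n) / (u n * l)) by (field; auto).
  unfold Rdiv. rewrite Rabs_mult, Rabs_Rinv, Rabs_mult by (apply Rmult_integral_contrapositive; auto).
  replace (l - u n) with (- (u n - l)) by ring. rewrite Rabs_Ropp.
  rewrite Rmult_comm. apply Rmult_le_compat_r. apply Rabs_pos.
  apply Rinv_le_contravar. apply Rmult_lt_0_compat; auto. apply Rabs_pos_lt; auto.
  apply Rmult_le_compat_r. apply Rabs_pos. apply Hu.
Qed.

Lemma sqrt_diff_bound x y : 0 <= x -> 0 < y -> Rabs (sqrt x - sqrt y) <= / sqrt y * Rabs (x - y).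
Proof.
  intros Hx Hy. pose proof (sqrt_lt_R0 y Hy). pose proof (sqrt_pos x).
  assert (E : sqrt x - sqrt y = (x - y) / (sqrt x + sqrt y)).
  { field_simplify_eq; [|lra]. rewrite <- (sqrt_sqrt x Hx) at 2. rewrite <- (sqrt_sqrt y) at 2 by lra. ring. }
  rewrite E. unfold Rdiv. rewrite Rabs_mult, Rmult_comm. apply Rmult_le_compat_r. apply Rabs_pos.
  rewrite Rabs_Rinv by lra. rewrite Rabs_pos_eq by lra. apply Rinv_le_contravar; lra.
Qed.

Lemma cl_sqrt u l : cl u l -> (forall n, 0 <= u n) -> 0 < l -> cl (fun n => sqrt (u n)) (sqrt l).
Proof.
  intros H Hu Hl. eapply summable_le with (K := / sqrt l); [|exact H]. intro n. apply sqrt_diff_bound; auto.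
Qed.

Lemma cl_shift u l : cl u l -> cl (fun n => u (S n)) l.
Proof. intro H. apply (summable_unshift (fun n => u n - l)); auto. Qed.

Lemma cl_unshift u l : cl (fun n => u (S n)) l -> cl u l.
Proof. intro H. apply (summable_shift (fun n => u n - l)); auto. Qed.

Lemma summable_even u : summable u -> summable (fun n => u (2 * n)%nat).
Proof.
  intros [B HB]. exists B. intro N. eapply Rle_trans; [|apply (HB (2 * N)%nat)].
  rewrite (psum_evenodd (fun n => Rabs (u n))).
  pose proof (psum_nonneg (fun n => Rabs (u (2 * n + 1)%nat)) N (fun _ => Rabs_pos _)). lra.
Qed.

Lemma summable_odd u : summable u -> summable (fun n => u (2 * n + 1)%nat).
Proof.
  intros [B HB]. exists B. intro N. eapply Rle_trans; [|apply (HB (2 * N)%nat)].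
  rewrite (psum_evenodd (fun n => Rabs (u n))).
  pose proof (psum_nonneg (fun n => Rabs (u (2 * n)%nat)) N (fun _ => Rabs_pos _)). lra.
Qed.

Lemma ln_le_minus1 x : 0 < x -> ln x <= x - 1.
Proof. intro H. pose proof (exp_ineq1_le (ln x)). rewrite exp_ln in H0; lra. Qed.

Lemma ln_diff_aux a b m : 0 < m -> m <= b -> b <= a -> 0 <= ln a - ln b <= / m * (a - b).
Proof.
  intros Hm Hb Hab. split.
  - assert (ln b <= ln a) by (apply ln_le; lra). lra.
  - replace (ln a - ln b) with (ln (a / b)).
    2: { unfold Rdiv. rewrite ln_mult, ln_Rinv; try apply Rinv_0_lt_compat; lra. }
    eapply Rle_trans. apply ln_le_minus1. apply Rdiv_lt_0_compat; lra.
    replace (a / b - 1) with ((a - b) * / b) by (field; lra).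
    rewrite Rmult_comm. apply Rmult_le_compat_r. lra. apply Rinv_le_contravar; lra.
Qed.

Lemma ln_diff_bound x y m : 0 < m -> m <= x -> m <= y -> Rabs (ln x - ln y) <= / m * Rabs (x - y).
Proof.
  intros Hm Hx Hy. destruct (Rle_dec y x).
  - destruct (ln_diff_aux x y m) as [A B]; auto. rewrite !Rabs_pos_eq; lra.
  - destruct (ln_diff_aux y x m) as [A B]; auto; try lra.
    rewrite <- (Rabs_Ropp (ln x - ln y)), <- (Rabs_Ropp (x - y)).
    rewrite !Rabs_pos_eq; lra.
Qed.

Lemma exp_diff_aux x y : y <= x -> 0 <= exp x - exp y <= exp x * (x - y).
Proof.
  intros H. split.
  - destruct (Req_dec x y). subst; lra. assert (exp y < exp x) by (apply exp_increasing; lra). lra.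
  - pose proof (exp_ineq1_le (y - x)).
    replace (exp y) with (exp x * exp (y - x)) by (rewrite <- exp_plus; f_equal; ring).
    pose proof (exp_pos x). nra.
Qed.

Lemma exp_diff_bound x y B : x <= B -> y <= B -> Rabs (exp x - exp y) <= exp B * Rabs (x - y).
Proof.
  intros Hx Hy.
  assert (Mono : forall a, a <= B -> exp a <= exp B).
  { intros a Ha. destruct (Req_dec a B). subst; lra. left; apply exp_increasing; lra. }
  destruct (Rle_dec y x).
  - destruct (exp_diff_aux x y) as [A Bd]; auto. rewrite !Rabs_pos_eq by lra.
    pose proof (Mono x Hx). nra.
  - destruct (exp_diff_aux y x) as [A Bd]; try lra.
    rewrite <- (Rabs_Ropp (exp x - exp y)), <- (Rabs_Ropp (x - y)).
    rewrite !Rabs_pos_eq by lra. pose proof (Mono y Hy). nra.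
Qed.

Lemma Rabs_le_inv x b : Rabs x <= b -> - b <= x <= b.
Proof. intro H. pose proof (Rle_abs x). pose proof (Rle_abs (- x)). rewrite Rabs_Ropp in H1. lra. Qed.


Lemma lim_by_bound (x y : nat -> R) (xl yl K : R) : is_lim_seq y yl ->
  (forall n, Rabs (x n - xl) <= K * Rabs (y n - yl)) -> is_lim_seq x xl.
Proof.
  intros Hy H.
  assert (Hd : is_lim_seq (fun n => K * Rabs (y n - yl)) 0).
  { replace (Finite 0) with (Rbar_mult K (Rbar_abs 0)).
    apply is_lim_seq_scal_l. apply is_lim_seq_abs.
    replace (Finite 0) with (Finite (yl - yl)) by (f_equal; ring).
    apply is_lim_seq_minus'; auto. apply is_lim_seq_const.
    simpl. rewrite Rabs_R0. f_equal; ring. }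
  apply is_lim_seq_le_le with (u := fun n => xl - K * Rabs (y n - yl)) (w := fun n => xl + K * Rabs (y n - yl)).
  - intro n. specialize (H n). apply Rabs_le_inv in H. lra.
  - replace (Finite xl) with (Finite (xl - 0)) by (f_equal; ring). apply is_lim_seq_minus'; auto. apply is_lim_seq_const.
  - replace (Finite xl) with (Finite (xl + 0)) by (f_equal; ring). apply is_lim_seq_plus'; auto. apply is_lim_seq_const.
Qed.

Lemma contraction_lim (e eta : nat -> R) (E th : R) :
  (forall n, 0 <= e n <= E) -> 0 <= th < 1 -> is_lim_seq eta 0 ->
  (forall n, e n <= eta n + th * e (S n)) -> is_lim_seq e 0.
Proof.
  intros He Hth Heta Hrec.
  apply is_lim_seq_Reals in Heta. apply is_lim_seq_Reals. intros eps Heps.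
  destruct (Heta (eps * (1 - th) / 2)) as [N HN].
  { apply Rdiv_lt_0_compat; [|lra]. apply Rmult_lt_0_compat; lra. }
  assert (Hind : forall m n, (n >= N)%nat -> e n <= eps / 2 + th ^ m * E).
  { induction m; intros n Hn.
    - simpl. pose proof (He n). lra.
    - specialize (HN n Hn). unfold R_dist in HN. rewrite Rminus_0_r in HN.
      apply Rabs_def2 in HN. destruct HN as [HN1 HN2].
      specialize (IHm (S n) ltac:(lia)). specialize (Hrec n). simpl.
      apply Rle_trans with (eta n + th * e (S n)); auto.
      apply Rle_trans with (eps * (1 - th) / 2 + th * (eps / 2 + th ^ m * E)).
      apply Rplus_le_compat; [lra|]. apply Rmult_le_compat_l; lra.
      right; field. }
  assert (E0 : 0 <= E) by (pose proof (He O); lra).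
  destruct (pow_lt_1_zero th ltac:(rewrite Rabs_pos_eq; lra) (eps / (2 * (E + 1)))) as [m Hm].
  { apply Rdiv_lt_0_compat; lra. }
  exists N. intros n Hn. unfold R_dist. rewrite Rminus_0_r.
  specialize (Hm m (le_n m)). rewrite Rabs_pos_eq in Hm by (apply pow_le; lra).
  specialize (Hind m n Hn). pose proof (He n).
  rewrite Rabs_pos_eq by lra.
  assert (th ^ m * E <= th ^ m * (E + 1)) by (apply Rmult_le_compat_l; [apply pow_le; lra|lra]).
  assert (th ^ m * (E + 1) < eps / 2).
  { apply Rmult_lt_compat_r with (r := E + 1) in Hm; [|lra].
    replace (eps / (2 * (E + 1)) * (E + 1)) with (eps / 2) in Hm by (field; lra). lra. }
  lra.
Qed.

Lemma maxtail_ge (f : nat -> R) (Z : R) n : (forall k, Rabs (f k) <= Z) ->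
  Rabs (f n) <= maxtail f n.
Proof.
  intro H. unfold maxtail.
  assert (H1 : Rbar_le (Rabs (f n)) (Sup_seq (fun k => Rabs (f (n + k)%nat)))).
  { apply Sup_seq_minor_le with O. rewrite Nat.add_0_r. simpl. lra. }
  assert (H2 : Rbar_le (Sup_seq (fun k => Rabs (f (n + k)%nat))) Z).
  { apply (is_sup_seq_lub _ _ (Sup_seq_correct _)). intros x [k ->]. simpl. apply H. }
  destruct (Sup_seq (fun k => Rabs (f (n + k)%nat))); simpl in *; try contradiction. auto.
Qed.

Lemma cl_ext u v l l' : (forall n, u n = v n) -> l = l' -> cl u l -> cl v l'.
Proof. intros H E Hc. subst. eapply summable_ext; [|exact Hc]. intro n; simpl; rewrite H; ring. Qed.

Lemma prodR_pos g n : (forall k, (1 <= k)%nat -> 0 < g k) -> 0 < prodR g n.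
Proof. intro H. induction n; simpl. lra. apply Rmult_lt_0_compat; auto. apply H; lia. Qed.

Lemma prodPar_pos f n : (forall k, (1 <= k)%nat -> 0 < f k) -> 0 < prodPar f n.
Proof.
  intro H. unfold prodPar. apply prodR_pos. intros k Hk.
  destruct (Bool.eqb _ _); auto. lra.
Qed.

Lemma prodPar_SS f n : prodPar f (S (S n)) = prodPar f n * f (S (S n)).
Proof.
  unfold prodPar. cbn [prodR].
  assert (E : Nat.even (S (S n)) = Nat.even n) by reflexivity. rewrite E.
  rewrite Nat.even_succ. rewrite <- Nat.negb_even.
  destruct (Nat.even n); simpl; ring.
Qed.

Lemma prodPar_1 f : prodPar f 1 = f 1%nat.
Proof. unfold prodPar. simpl. ring. Qed.

Lemma prodPar_0 f : prodPar f 0 = 1.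
Proof. reflexivity. Qed.

Lemma prodPar_odd f N : prodPar f (2 * S N - 1) = prodPar f (2 * N - 1) * f (2 * N + 1)%nat.
Proof.
  destruct N. simpl. rewrite prodPar_1. rewrite prodPar_0. ring.
  replace (2 * S (S N) - 1)%nat with (S (S (2 * S N - 1))) by lia. rewrite prodPar_SS.
  f_equal. f_equal. lia.
Qed.

Lemma prodPar_even f N : prodPar f (2 * S N) = prodPar f (2 * N) * f (2 * N + 2)%nat.
Proof.
  replace (2 * S N)%nat with (S (S (2 * N))) by lia. rewrite prodPar_SS. f_equal. f_equal. lia.
Qed.

Lemma even_2N N : Nat.even (2 * N) = true.
Proof. rewrite Nat.even_mul. reflexivity. Qed.

Lemma even_2N1 N : Nat.even (2 * N + 1) = false.
Proof. rewrite Nat.add_1_r, Nat.even_succ, <- Nat.negb_even, even_2N. reflexivity. Qed.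

Lemma ln_sqrt_half x : 0 < x -> ln (sqrt x) = ln x / 2.
Proof.
  intro H. pose proof (sqrt_lt_R0 x H).
  assert (ln x = ln (sqrt x) + ln (sqrt x)). { rewrite <- ln_mult; auto. rewrite sqrt_sqrt; lra. }
  lra.
Qed.

Lemma S_real x : 0 <= x -> let s := (x + 2 + sqrt (x * (x + 4))) / 2 in s + / s = x + 2 /\ 1 + x / 2 <= s.
Proof.
  intros H s. unfold s.
  assert (Ha : 0 <= x * (x + 4)) by nra.
  pose proof (sqrt_pos (x * (x + 4))). pose proof (sqrt_sqrt _ Ha).
  split; [|lra].
  replace (/ ((x + 2 + sqrt (x * (x + 4))) / 2)) with ((x + 2 - sqrt (x * (x + 4))) / 2).
  lra. field_simplify_eq; [|lra]. nra.
Qed.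

Lemma prodR_inv f n : (forall l, (1 <= l)%nat -> f l <> 0) -> prodR f n * prodR (fun l => / f l) n = 1.
Proof.
  intro H. induction n; simpl. ring.
  replace (prodR f n * f (S n) * (prodR (fun l : nat => / f l) n * / f (S n))) with
    ((prodR f n * prodR (fun l : nat => / f l) n) * (f (S n) * / f (S n))) by ring.
  rewrite IHn, Rinv_r. ring. apply H; lia.
Qed.

Section Main.
Variable V : nat -> R.
Variables C M : R.
Hypothesis HC : 0 < C.
Hypothesis HV : forall n, (1 <= n)%nat -> C <= V n.
Hypothesis HM : forall n, (1 <= n)%nat -> Rabs (V n) <= M.
Hypothesis Hser : summable (fun n => INR n * (V (n + 1)%nat - V n)).

Local Notation L := (Vinf V).
Definition aa n := V n * (V n + 4).
Local Notation ainf := (Vinf V * (Vinf V + 4)).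
Local Notation ff := (fun k => bseq V k ^ 2 - 4).

Lemma HVS n : C <= V (S n). Proof. apply HV; lia. Qed.
Lemma HMS n : V (S n) <= M.
Proof. pose proof (HM (S n) ltac:(lia)). apply Rabs_le_inv in H. lra. Qed.

Lemma CleM : C <= M. Proof. pose proof (HVS 0); pose proof (HMS 0); lra. Qed.

Lemma V_lim : is_lim_seq V L /\ cl V L.
Proof.
  destruct (tail_lemma V) as [l [H1 H2]].
  { eapply summable_ext; [|exact Hser]. intro n; simpl. rewrite Nat.add_1_r. reflexivity. }
  unfold Vinf. rewrite (is_lim_seq_unique _ _ H1). simpl. auto.
Qed.

Lemma L_bounds : C <= L <= M.
Proof.
  destruct V_lim as [H _]. apply is_lim_seq_incr_1 in H. split.
  - apply (is_lim_seq_le (fun _ => C) (fun n => V (S n)) C L); auto. intro; apply HVS. apply is_lim_seq_const.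
  - apply (is_lim_seq_le (fun n => V (S n)) (fun _ => M) L M); auto. intro; apply HMS. apply is_lim_seq_const.
Qed.

Definition amin := C * (C + 4).
Lemma amin_pos : 0 < amin. Proof. unfold amin; nra. Qed.
Lemma aa_lb n : (1 <= n)%nat -> amin <= aa n.
Proof. intro H. pose proof (HV n H). unfold aa, amin. nra. Qed.
Lemma aa_ub n : (1 <= n)%nat -> aa n <= M * (M + 4).
Proof. intro H. pose proof (HV n H). pose proof (HM n H). apply Rabs_le_inv in H1. unfold aa. nra. Qed.
Lemma ainf_lb : amin <= ainf.
Proof. pose proof L_bounds. unfold amin. nra. Qed.
Lemma ainf_pos : 0 < ainf. Proof. pose proof ainf_lb; pose proof amin_pos; lra. Qed.

Lemma cl_VS : cl (fun n => V (S n)) L.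
Proof. apply cl_shift. apply V_lim. Qed.

Lemma cl_aS : cl (fun n => aa (S n)) ainf.
Proof.
  unfold aa. apply cl_mult. apply cl_VS. apply (cl_plus _ (fun _ => 4)). apply cl_VS. apply cl_const.
Qed.

Lemma aa_diff x y : (1 <= x)%nat -> (1 <= y)%nat -> Rabs (aa x - aa y) <= (2 * M + 4) * Rabs (V x - V y).
Proof.
  intros Hx Hy. unfold aa.
  replace (V x * (V x + 4) - V y * (V y + 4)) with ((V x - V y) * (V x + V y + 4)) by ring.
  rewrite Rabs_mult, Rmult_comm. apply Rmult_le_compat_r. apply Rabs_pos.
  pose proof (HV x Hx); pose proof (HV y Hy); pose proof (HM x Hx); pose proof (HM y Hy).
  apply Rabs_le_inv in H1; apply Rabs_le_inv in H2. rewrite Rabs_pos_eq; lra.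
Qed.

Local Notation Sinf := ((Vinf V + 2 + sqrt ainf) / 2).

Lemma cl_SS : cl (fun n => Sseq V (S n)) Sinf.
Proof.
  apply cl_ext with (u := fun n => / 2 * (V (S n) + 2 + sqrt (aa (S n)))) (l := / 2 * (Vinf V + 2 + sqrt ainf)).
  intro n; unfold Sseq, aa; field. field.
  apply cl_scal. apply cl_plus. apply (cl_plus _ (fun _ => 2)). apply cl_VS. apply cl_const.
  apply cl_sqrt. apply cl_aS. intro n; pose proof (aa_lb (S n) ltac:(lia)); pose proof amin_pos; lra.
  apply ainf_pos.
Qed.

Theorem part_a : summable (fun n => Sseq V (n + 2) - Sseq V (n + 1)).
Proof.
  pose proof cl_SS as H. pose proof (cl_shift _ _ H) as H2.
  eapply summable_ext; [|apply (summable_minus _ _ H2 H)].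
  intro n. simpl. replace (n + 2)%nat with (S (S n)) by lia. replace (n + 1)%nat with (S n) by lia. ring.
Qed.

Lemma S_identity n : (1 <= n)%nat -> Sseq V n + / Sseq V n = V n + 2 /\ 1 + C / 2 <= Sseq V n.
Proof.
  intro Hn. pose proof (HV n Hn). unfold Sseq.
  assert (Ha : 0 <= V n * (V n + 4)) by nra.
  pose proof (sqrt_pos (V n * (V n + 4))). pose proof (sqrt_sqrt _ Ha).
  split; [|lra].
  assert (Hs : 0 < (V n + 2 + sqrt (V n * (V n + 4))) / 2) by lra.
  replace (/ ((V n + 2 + sqrt (V n * (V n + 4))) / 2)) with ((V n + 2 - sqrt (V n * (V n + 4))) / 2).
  lra. field_simplify_eq; [|lra]. nra.
Qed.


Lemma ff_eq k : bseq V k ^ 2 - 4 = aa k.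
Proof. unfold bseq, aa. ring. Qed.

Lemma ff_pos k : (1 <= k)%nat -> 0 < ff k.
Proof. intro H. cbv beta. rewrite ff_eq. pose proof (aa_lb k H). pose proof amin_pos. lra. Qed.

Local Notation P := (Cz_partial V).

Lemma P_S N : P (S N) = P N * sqrt (aa (2 * N + 2) / aa (2 * N + 1)).
Proof.
  unfold Cz_partial. cbn [prodR]. f_equal. unfold aa.
  replace (2 * S N)%nat with (2 * N + 2)%nat by lia. replace (2 * N + 2 - 1)%nat with (2 * N + 1)%nat by lia. reflexivity.
Qed.

Lemma P_prop N : 0 < P N /\ P N ^ 2 * prodPar ff (2 * N - 1) = prodPar ff (2 * N).
Proof.
  induction N.
  - simpl. unfold Cz_partial. simpl. split. lra. rewrite prodPar_0. ring.
  - destruct IHN as [H1 H2]. rewrite P_S.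
    assert (A1 := aa_lb (2 * N + 2) ltac:(lia)). assert (A2 := aa_lb (2 * N + 1) ltac:(lia)).
    pose proof amin_pos.
    assert (Hq : 0 < aa (2 * N + 2) / aa (2 * N + 1)) by (apply Rdiv_lt_0_compat; lra).
    split. apply Rmult_lt_0_compat; auto. apply sqrt_lt_R0; auto.
    rewrite prodPar_odd, prodPar_even, <- H2. cbv beta. rewrite !ff_eq.
    replace ((P N * sqrt (aa (2 * N + 2) / aa (2 * N + 1))) ^ 2) with
      (P N ^ 2 * (sqrt (aa (2 * N + 2) / aa (2 * N + 1)) * sqrt (aa (2 * N + 2) / aa (2 * N + 1)))) by ring.
    rewrite sqrt_sqrt by lra. field. lra.
Qed.

Lemma ln_g N : ln (sqrt (aa (2 * N + 2) / aa (2 * N + 1))) = (ln (aa (2 * N + 2)) - ln (aa (2 * N + 1))) / 2.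
Proof.
  assert (A1 := aa_lb (2 * N + 2) ltac:(lia)). assert (A2 := aa_lb (2 * N + 1) ltac:(lia)).
  pose proof amin_pos.
  rewrite ln_sqrt_half by (apply Rdiv_lt_0_compat; lra).
  f_equal. replace (aa (2 * N + 2) / aa (2 * N + 1)) with (aa (2 * N + 2) * / aa (2 * N + 1)) by reflexivity.
  rewrite ln_mult, ln_Rinv; try lra. apply Rinv_0_lt_compat; lra.
Qed.

Definition sP N := psum (fun m => ln (sqrt (aa (2 * m + 2) / aa (2 * m + 1)))) N.

Lemma P_exp N : P N = exp (sP N).
Proof.
  induction N. unfold sP, Cz_partial. simpl. rewrite exp_0. auto.
  rewrite P_S. unfold sP. cbn [psum]. fold (sP N). rewrite exp_plus, <- IHN.
  rewrite exp_ln. auto. apply sqrt_lt_R0.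
  assert (A1 := aa_lb (2 * N + 2) ltac:(lia)). assert (A2 := aa_lb (2 * N + 1) ltac:(lia)).
  pose proof amin_pos. apply Rdiv_lt_0_compat; lra.
Qed.

Lemma sP_tail : exists l : R, is_lim_seq sP l /\ cl sP l.
Proof.
  apply tail_lemma.
  pose proof (summable_odd _ Hser) as Ho.
  eapply summable_le with (K := (M + 2) / amin); [|exact Ho].
  intro N. unfold sP. cbn [psum].
  replace (psum (fun m => ln (sqrt (aa (2 * m + 2) / aa (2 * m + 1)))) N +
           ln (sqrt (aa (2 * N + 2) / aa (2 * N + 1))) -
           psum (fun m => ln (sqrt (aa (2 * m + 2) / aa (2 * m + 1)))) N)
    with (ln (sqrt (aa (2 * N + 2) / aa (2 * N + 1)))) by ring.
  rewrite ln_g. pose proof amin_pos.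
  assert (H1 := ln_diff_bound (aa (2 * N + 2)) (aa (2 * N + 1)) amin H (aa_lb (2 * N + 2) ltac:(lia)) (aa_lb (2 * N + 1) ltac:(lia))).
  assert (H2 := aa_diff (2 * N + 2) (2 * N + 1) ltac:(lia) ltac:(lia)).
  replace (2 * N + 1 + 1)%nat with (2 * N + 2)%nat by lia.
  rewrite !Rabs_mult. rewrite (Rabs_pos_eq (INR N)) by apply pos_INR.
  rewrite (Rabs_pos_eq (INR (2 * N + 1))) by apply pos_INR.
  unfold Rdiv. rewrite Rabs_mult, (Rabs_pos_eq (/2)) by lra.
  assert (HN : INR N <= INR (2 * N + 1)) by (apply le_INR; lia).
  pose proof (pos_INR N).
  pose proof (Rabs_pos (V (2 * N + 2)%nat - V (2 * N + 1)%nat)).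
  pose proof (Rabs_pos (ln (aa (2 * N + 2)) - ln (aa (2 * N + 1)))).
  assert (Hm : 0 < / amin) by (apply Rinv_0_lt_compat; auto).
  assert (HM0 : 0 <= M + 2). { pose proof CleM. lra. }
  assert (X : Rabs (ln (aa (2 * N + 2)) - ln (aa (2 * N + 1))) <= / amin * ((2 * M + 4) * Rabs (V (2 * N + 2)%nat - V (2 * N + 1)%nat))).
  { eapply Rle_trans. apply H1. apply Rmult_le_compat_l; lra. }
  set (x := Rabs (ln (aa (2 * N + 2)) - ln (aa (2 * N + 1)))) in *.
  set (y := Rabs (V (2 * N + 2)%nat - V (2 * N + 1)%nat)) in *.
  apply Rle_trans with (INR N * ((/ amin * ((2 * M + 4) * y)) * / 2)).
  { apply Rmult_le_compat_l; auto. apply Rmult_le_compat_r; lra. }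
  apply Rle_trans with (INR (2 * N + 1) * ((/ amin * ((2 * M + 4) * y)) * / 2)).
  { apply Rmult_le_compat_r; auto. apply Rmult_le_pos; [|lra]. apply Rmult_le_pos. lra.
    apply Rmult_le_pos; lra. }
  right. field. lra.
Qed.


Definition pinf := real (Lim_seq P).

Lemma P_facts : is_lim_seq P pinf /\ cl P pinf /\ 0 < pinf /\
  exists Pmin, 0 < Pmin /\ forall N, Pmin <= P N.
Proof.
  destruct sP_tail as [l [Hl Hcl]]. destruct (cl_bounded _ _ Hcl) as [B HB].
  assert (HlB : Rabs l <= B).
  { apply (is_lim_seq_le (fun n => Rabs (sP n)) (fun _ => B) (Rabs l) B); auto.
    apply (is_lim_seq_abs _ l Hl). apply is_lim_seq_const. }
  assert (Hcl' : cl P (exp l)).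
  { eapply summable_le with (K := exp B); [|exact Hcl]. intro N. rewrite P_exp.
    apply exp_diff_bound. specialize (HB N); apply Rabs_le_inv in HB; lra.
    apply Rabs_le_inv in HlB; lra. }
  assert (E : pinf = exp l).
  { unfold pinf. rewrite (is_lim_seq_unique _ _ (cl_lim _ _ Hcl')). reflexivity. }
  rewrite E. split. apply cl_lim; auto. split; auto. split. apply exp_pos.
  exists (exp (- B)). split. apply exp_pos. intro N. rewrite P_exp.
  specialize (HB N). apply Rabs_le_inv in HB.
  destruct (Req_dec (sP N) (- B)) as [e|ne]. rewrite e; lra. left; apply exp_increasing; lra.
Qed.

Local Notation c := (Rpower (Vinf V * (Vinf V + 4)) (- (1 / 4))).

Lemma c_pos : 0 < c.
Proof. unfold Rpower. apply exp_pos. Qed.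

Lemma c_sq : c * c * sqrt ainf = 1.
Proof.
  pose proof ainf_pos. rewrite <- Rpower_plus, <- Rpower_sqrt by auto. rewrite <- Rpower_plus.
  replace (- (1 / 4) + - (1 / 4) + / 2) with 0 by field. apply Rpower_O; auto.
Qed.

Lemma Cz_eq : Cz V = c * pinf.
Proof. reflexivity. Qed.

Lemma Cz_pos : 0 < Cz V.
Proof. rewrite Cz_eq. destruct P_facts as [_ [_ [H _]]]. pose proof c_pos. nra. Qed.

Lemma z_even N : zseq V (2 * N) = Cz V * / P N.
Proof.
  unfold zseq. rewrite even_2N. f_equal. destruct (P_prop N) as [H1 H2].
  rewrite <- H2. assert (0 < prodPar ff (2 * N - 1)) by (apply prodPar_pos; apply ff_pos).
  replace (prodPar ff (2 * N - 1) / (P N ^ 2 * prodPar ff (2 * N - 1))) with (/ P N * / P N) by (field; lra).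
  rewrite sqrt_square; auto. left; apply Rinv_0_lt_compat; auto.
Qed.

Lemma z_odd N : zseq V (2 * N + 1) = / Cz V * (P N * / sqrt (aa (2 * N + 1))).
Proof.
  unfold zseq. rewrite even_2N1. f_equal. destruct (P_prop N) as [H1 H2].
  replace (2 * N + 1 - 1)%nat with (2 * N)%nat by lia.
  replace (2 * N + 1)%nat with (2 * S N - 1)%nat at 1 by lia.
  rewrite prodPar_odd, <- H2. cbv beta. rewrite ff_eq.
  assert (0 < prodPar ff (2 * N - 1)) by (apply prodPar_pos; apply ff_pos).
  assert (A := aa_lb (2 * N + 1) ltac:(lia)). pose proof amin_pos.
  replace (P N ^ 2 * prodPar ff (2 * N - 1) / (prodPar ff (2 * N - 1) * aa (2 * N + 1)))
    with ((P N * P N) / aa (2 * N + 1)) by (field; lra).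
  rewrite sqrt_div_alt by lra. rewrite sqrt_square by lra. reflexivity.
Qed.

Lemma z_cl : cl (zseq V) c.
Proof.
  destruct P_facts as [HPl [HPc [Hp [Pmin [HPmin HPm]]]]].
  pose proof Cz_pos as HCz. pose proof c_pos. pose proof ainf_pos. pose proof amin_pos.
  apply summable_evenodd.
  - apply cl_ext with (u := fun N => Cz V * / P N) (l := Cz V * / pinf).
    intro N; rewrite z_even; auto. rewrite Cz_eq; field; lra.
    apply cl_scal. apply cl_inv with Pmin; auto. intro n. rewrite Rabs_pos_eq; auto. pose proof (HPm n); lra. lra.
  - apply cl_ext with (u := fun N => / Cz V * (P N * / sqrt (aa (2 * N + 1)))) (l := / Cz V * (pinf * / sqrt ainf)).
    intro N; rewrite z_odd; auto.
    { rewrite Cz_eq. pose proof c_sq. pose proof (sqrt_lt_R0 _ H0).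
      field_simplify_eq; try lra; try nra. }
    apply cl_scal. apply cl_mult; auto. apply cl_inv with (sqrt amin).
    apply cl_sqrt. 
    { pose proof (summable_even _ cl_aS). eapply summable_ext; [|exact H2]. intro n; cbv beta.
      replace (S (2 * n)) with (2 * n + 1)%nat by lia. reflexivity. }
    intro n. pose proof (aa_lb (2 * n + 1) ltac:(lia)); lra. auto.
    apply sqrt_lt_R0; auto.
    intro n. rewrite Rabs_pos_eq by apply sqrt_pos. apply sqrt_le_1_alt. apply aa_lb; lia.
    pose proof (sqrt_lt_R0 _ H0); lra.
Qed.

Theorem part_c1 n : (1 <= n)%nat ->
  zseq V n * zseq V (n + 1) = 1 / sqrt (V (n + 1)%nat * (V (n + 1)%nat + 4)).
Proof.
  intro Hn. pose proof Cz_pos.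
  assert (E : (n + 1 - 1)%nat = n) by lia.
  unfold zseq. rewrite E.
  assert (EP : prodPar ff (n + 1) = prodPar ff (n - 1) * ff (n + 1)%nat).
  { replace (n + 1)%nat with (S (S (n - 1))) by lia. apply prodPar_SS. }
  rewrite EP.
  assert (HA : 0 < prodPar ff (n - 1)) by (apply prodPar_pos; apply ff_pos).
  assert (HB : 0 < prodPar ff n) by (apply prodPar_pos; apply ff_pos).
  assert (Hf : 0 < ff (n + 1)%nat) by (apply ff_pos; lia).
  cbv beta in Hf |- *. rewrite ff_eq in *. unfold aa in *.
  set (f := V (n + 1)%nat * (V (n + 1)%nat + 4)) in *.
  set (A := prodPar (fun k : nat => bseq V k ^ 2 - 4) (n - 1)) in *.
  set (B := prodPar (fun k : nat => bseq V k ^ 2 - 4) n) in *.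
  assert (Ep : (if Nat.even n then Cz V else / Cz V) * (if Nat.even (n + 1) then Cz V else / Cz V) = 1).
  { rewrite Nat.add_1_r, Nat.even_succ, <- Nat.negb_even. destruct (Nat.even n); simpl; field; lra. }
  transitivity ((if Nat.even n then Cz V else / Cz V) * (if Nat.even (n + 1) then Cz V else / Cz V) *
     (sqrt (A / B) * sqrt (B / (A * f)))). ring.
  rewrite Ep, Rmult_1_l, <- sqrt_mult.
  replace (A / B * (B / (A * f))) with (1 / f) by (field; lra).
  rewrite sqrt_div_alt, sqrt_1; auto.
  left; apply Rdiv_lt_0_compat; auto. left; apply Rdiv_lt_0_compat; auto. apply Rmult_lt_0_compat; auto.
Qed.

Theorem part_c2 : summable (fun m => zseq V (m + 1) - c).
Proof.
  pose proof (cl_shift _ _ z_cl). eapply summable_ext; [|exact H]. intro n; simpl. rewrite Nat.add_1_r. reflexivity.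
Qed.


Lemma S_ge n : (1 <= n)%nat -> 1 + C / 2 <= Sseq V n.
Proof. intro H. pose proof (HV n H). destruct (S_real (V n)) as [_ X]; unfold Sseq; lra. Qed.

Lemma S_id n : (1 <= n)%nat -> Sseq V n + / Sseq V n = V n + 2.
Proof. intro H. pose proof (HV n H). destruct (S_real (V n)) as [X _]; unfold Sseq; lra. Qed.

Lemma Sinf_id : Sinf + / Sinf = L + 2 /\ 1 <= Sinf.
Proof. pose proof L_bounds. destruct (S_real L) as [X Y]; lra. Qed.

Lemma z_lb : exists zmin, 0 < zmin /\ forall n, zmin <= zseq V n.
Proof.
  destruct P_facts as [HPl [HPc [Hp [Pmin [HPmin HPm]]]]].
  destruct (cl_bounded _ _ HPc) as [Pmax HPmax].
  pose proof Cz_pos. pose proof (aa_ub 1 (le_n 1)). pose proof (aa_lb 1 (le_n 1)). pose proof amin_pos.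
  assert (HPmax' : forall N, P N <= Pmax) by (intro N; specialize (HPmax N); apply Rabs_le_inv in HPmax; lra).
  assert (Pmaxpos : 0 < Pmax) by (pose proof (HPmax' 0%nat); pose proof (HPm 0%nat); lra).
  assert (Mpos : 0 < M * (M + 4)) by lra.
  exists (Rmin (Cz V / Pmax) (/ Cz V * (Pmin / sqrt (M * (M + 4))))).
  split. apply Rmin_pos. apply Rdiv_lt_0_compat; auto.
  apply Rmult_lt_0_compat. apply Rinv_0_lt_compat; auto. apply Rdiv_lt_0_compat; auto. apply sqrt_lt_R0; auto.
  intro n. destruct (Nat.Even_or_Odd n) as [[N HN]|[N HN]]; subst n.
  - eapply Rle_trans. apply Rmin_l. rewrite z_even. apply Rmult_le_compat_l. lra.
    apply Rinv_le_contravar. pose proof (HPm N); lra. auto.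
  - eapply Rle_trans. apply Rmin_r. rewrite z_odd. apply Rmult_le_compat_l. left; apply Rinv_0_lt_compat; auto.
    pose proof (aa_lb (2 * N + 1) ltac:(lia)). pose proof (aa_ub (2 * N + 1) ltac:(lia)).
    apply Rmult_le_compat. lra. left; apply Rinv_0_lt_compat, sqrt_lt_R0; auto. auto.
    apply Rinv_le_contravar. apply sqrt_lt_R0; lra. apply sqrt_le_1_alt; auto.
Qed.

Lemma z_ub : exists Zmax, forall n, Rabs (zseq V n) <= Zmax.
Proof. apply (cl_bounded _ _ z_cl). Qed.

Lemma cl_Vt : cl (fun n => Vtilde V (n + 1)) L.
Proof.
  destruct z_lb as [zmin [Hz0 Hz]].
  assert (zpos : forall n, 0 < zseq V n) by (intro n; pose proof (Hz n); lra).
  pose proof (S_ge) as HS. pose proof HC.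
  assert (Spos : forall n, 0 < Sseq V (S n)) by (intro n; pose proof (HS (S n) ltac:(lia)); lra).
  pose proof c_pos. destruct Sinf_id as [SI1 SI2].
  apply cl_ext with (u := fun n => zseq V (S (S n)) * / zseq V (S n) * Sseq V (S (S n)) + zseq V n * (/ zseq V (S n) * / Sseq V (S n)) - 2)
     (l := c * / c * Sinf + c * (/ c * / Sinf) - 2).
  { intro n. unfold Vtilde. replace (n + 1 + 1)%nat with (S (S n)) by lia.
    replace (n + 1 - 1)%nat with n by lia. replace (n + 1)%nat with (S n) by lia.
    pose proof (zpos (S n)). pose proof (Spos n). field. lra. }
  { replace (c * / c * Sinf + c * (/ c * / Sinf) - 2) with (Sinf + / Sinf - 2) by (field; lra). lra. }
  assert (Hzinv : cl (fun n => / zseq V (S n)) (/ c)).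
  { apply cl_inv with zmin; auto. apply cl_shift, z_cl. intro n. rewrite Rabs_pos_eq; auto. left; auto. lra. }
  apply (cl_minus _ (fun _ => 2)). 2: apply cl_const.
  apply cl_plus.
  - apply cl_mult. apply cl_mult. apply (cl_shift (fun n => zseq V (S n))), cl_shift, z_cl. auto. apply (cl_shift (fun n => Sseq V (S n))), cl_SS.
  - apply cl_mult. apply z_cl. apply cl_mult; auto. apply cl_inv with 1. apply cl_SS. lra.
    intro n. rewrite Rabs_pos_eq. pose proof (HS (S n) ltac:(lia)). lra. left; auto. lra.
Qed.

Theorem part_e1 : summable (fun n => Vtilde V (n + 1) - V (n + 1)%nat).
Proof.
  pose proof (cl_minus _ _ _ _ cl_Vt cl_VS). eapply summable_ext; [|exact H].
  intro n. cbv beta. rewrite Nat.add_1_r. ring.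
Qed.

Theorem part_d1 : is_lim_seq (fun n => Vtilde V (n + 1)) L.
Proof. apply cl_lim, cl_Vt. Qed.

Lemma S_ratio i j : (i <= j)%nat -> 0 < prodR (Sseq V) i * prodR (fun l => / Sseq V l) j <= 1.
Proof.
  intro H. induction H.
  - rewrite prodR_inv. lra. intros l Hl. pose proof (S_ge l Hl). pose proof HC. lra.
  - cbn [prodR]. pose proof (S_ge (S m) ltac:(lia)). pose proof HC.
    assert (0 < / Sseq V (S m) <= 1).
    { split. apply Rinv_0_lt_compat; lra. rewrite <- Rinv_1. apply Rinv_le_contravar; lra. }
    split. rewrite <- Rmult_assoc. apply Rmult_lt_0_compat; lra.
    rewrite <- Rmult_assoc. replace 1 with (1 * 1) by ring. apply Rmult_le_compat; lra.
Qed.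

Theorem part_d2 : exists Mb, forall m n, (1 <= m)%nat -> (1 <= n)%nat ->
     Rabs (phiP V (Nat.min m n) * phiM V (Nat.max m n)) <= Mb.
Proof.
  destruct z_ub as [Z HZ]. exists (Z * Z). intros m n _ _.
  unfold phiP, phiM. destruct (S_ratio (Nat.min m n) (Nat.max m n) ltac:(lia)) as [A B].
  set (i := Nat.min m n) in *. set (j := Nat.max m n) in *.
  replace (zseq V i * prodR (Sseq V) i * (zseq V j * prodR (fun l => / Sseq V l) j)) with
    (zseq V i * zseq V j * (prodR (Sseq V) i * prodR (fun l => / Sseq V l) j)) by ring.
  rewrite Rabs_mult, (Rabs_pos_eq (prodR (Sseq V) i * prodR (fun l => / Sseq V l) j)) by lra.
  rewrite Rabs_mult.
  pose proof (HZ i); pose proof (HZ j). pose proof (Rabs_pos (zseq V i)). pose proof (Rabs_pos (zseq V j)).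
  apply Rle_trans with (Rabs (zseq V i) * Rabs (zseq V j) * 1). apply Rmult_le_compat_l; [nra|lra].
  rewrite Rmult_1_r. apply Rmult_le_compat; auto.
Qed.

Theorem part_d3 : exists Mb, forall n, (1 <= n)%nat -> Rabs (phiP V n * phiM V n) <= Mb.
Proof.
  destruct part_d2 as [Mb H]. exists Mb. intros n Hn. specialize (H n n Hn Hn).
  rewrite Nat.min_id, Nat.max_id in H. auto.
Qed.


Fixpoint useq (n : nat) : R :=
  match n with
  | O => 1
  | S m => match m with O => 1 | S k => (2 + V m) * useq m - useq k end
  end.

Lemma u_rec n : useq (S (S n)) = (2 + V (S n)) * useq (S n) - useq n.
Proof. reflexivity. Qed.

Lemma u_mono n : 1 <= useq n /\ useq n <= useq (S n) /\ ((1 <= n)%nat -> (1 + C) * useq n <= useq (S n)).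
Proof.
  induction n.
  - simpl. split; [lra|]. split; [lra|]. intro; lia.
  - destruct IHn as [A [B _]]. rewrite u_rec. pose proof (HVS n).
    assert ((1 + C) * useq (S n) <= (2 + V (S n)) * useq (S n) - useq n) by nra.
    split; [lra|]. split; [|intros; lra]. pose proof HC. nra.
Qed.

Lemma u_pos n : 0 < useq n. Proof. destruct (u_mono n); lra. Qed.

Lemma u_growth m j : useq (S m) * (1 + C) ^ j <= useq (S m + j).
Proof.
  induction j. simpl. rewrite Nat.add_0_r. lra.
  replace (S m + S j)%nat with (S (S m + j)) by lia.
  destruct (u_mono (S m + j)) as [_ [_ G]]. specialize (G ltac:(lia)).
  change ((1 + C) ^ S j) with ((1 + C) * (1 + C) ^ j). pose proof HC.
  assert (0 < (1 + C) ^ j) by (apply pow_lt; lra). pose proof (u_pos (S m)). nra.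
Qed.

Definition rr n := useq (S n) / useq n.

Lemma rr_rec n : rr (S n) = 2 + V (S n) - / rr n.
Proof.
  unfold rr. rewrite u_rec. pose proof (u_pos n). pose proof (u_pos (S n)). field. lra.
Qed.

Lemma rr_ge n : 1 + C <= rr (S n).
Proof.
  unfold rr. destruct (u_mono (S n)) as [_ [_ G]]. specialize (G ltac:(lia)).
  pose proof (u_pos (S n)). apply Rmult_le_reg_r with (useq (S n)); auto.
  unfold Rdiv. rewrite Rmult_assoc, Rinv_l by lra. lra.
Qed.

Lemma rr_ge1 n : 1 <= rr n.
Proof.
  unfold rr. destruct (u_mono n) as [A [B _]]. pose proof (u_pos n).
  apply Rmult_le_reg_r with (useq n); auto. unfold Rdiv. rewrite Rmult_assoc, Rinv_l by lra. lra.
Qed.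

Local Notation q := (/ (1 + C)).

Lemma q_bounds : 0 < q < 1.
Proof. pose proof HC. split. apply Rinv_0_lt_compat; lra. rewrite <- Rinv_1. apply Rinv_lt_contravar; lra. Qed.

Definition dd n := rr (S n) - Sseq V (S n).

Lemma dd_rec n : Rabs (dd (S n)) <= q * (Rabs (dd n) + Rabs (Sseq V (S (S n)) - Sseq V (S n))).
Proof.
  unfold dd. rewrite rr_rec.
  pose proof (S_id (S (S n)) ltac:(lia)) as Hid.
  pose proof (S_ge (S (S n)) ltac:(lia)) as HSg. pose proof (rr_ge n) as Hr. pose proof HC.
  replace (2 + V (S (S n)) - / rr (S n) - Sseq V (S (S n))) with
    ((rr (S n) - Sseq V (S n) + (Sseq V (S n) - Sseq V (S (S n)))) * (/ Sseq V (S (S n)) * / rr (S n))).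
  2: { replace (2 + V (S (S n))) with (Sseq V (S (S n)) + / Sseq V (S (S n))) by lra. field. lra. }
  rewrite Rabs_mult, Rmult_comm. apply Rmult_le_compat.
  apply Rabs_pos. apply Rabs_pos.
  rewrite Rabs_pos_eq. 2: { left. apply Rmult_lt_0_compat; apply Rinv_0_lt_compat; lra. }
  rewrite <- (Rmult_1_l q). apply Rmult_le_compat.
  left; apply Rinv_0_lt_compat; lra. left; apply Rinv_0_lt_compat; lra.
  rewrite <- Rinv_1. apply Rinv_le_contravar; lra. apply Rinv_le_contravar; lra.
  eapply Rle_trans. apply Rabs_triang. rewrite (Rabs_minus_sym (Sseq V (S n))). lra.
Qed.

Lemma dd_summable : summable dd.
Proof.
  destruct part_a as [BS HBS]. pose proof q_bounds as [q0 q1].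
  exists ((Rabs (dd O) + q * BS) / (1 - q)).
  assert (Hstep : forall N, psum (fun n => Rabs (dd n)) (S N) <= Rabs (dd O) + q * (psum (fun n => Rabs (dd n)) (S N) + BS)).
  { intro N. rewrite psum_shift at 1.
    assert (psum (fun n => Rabs (dd (S n))) N <= q * (psum (fun n => Rabs (dd n)) N + BS)).
    { specialize (HBS N).
      apply Rle_trans with (psum (fun n => q * (Rabs (dd n) + Rabs (Sseq V (S (S n)) - Sseq V (S n)))) N).
      apply psum_le. intro; apply dd_rec.
      rewrite (psum_scal q (fun n => Rabs (dd n) + Rabs (Sseq V (S (S n)) - Sseq V (S n)))).
      rewrite (psum_plus (fun n => Rabs (dd n))). apply Rmult_le_compat_l; [lra|].
      apply Rplus_le_compat_l. eapply Rle_trans; [|exact HBS]. right. apply psum_ext. intros n _.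
      replace (n + 2)%nat with (S (S n)) by lia. replace (n + 1)%nat with (S n) by lia. reflexivity. }
    assert (psum (fun n => Rabs (dd n)) N <= psum (fun n => Rabs (dd n)) (S N)).
    { simpl. pose proof (Rabs_pos (dd N)). lra. }
    pose proof (Rabs_pos (dd O)). nra. }
  intro N. destruct N. simpl.
  apply Rdiv_le_0_compat; [|lra]. pose proof (Rabs_pos (dd O)).
  assert (0 <= BS). { pose proof (HBS O). simpl in H0. lra. } nra.
  specialize (Hstep N). apply Rmult_le_reg_r with (1 - q). lra.
  unfold Rdiv. rewrite Rmult_assoc, Rinv_l by lra. lra.
Qed.

Lemma cl_rr : cl (fun n => rr (S n)) Sinf.
Proof.
  apply cl_ext with (u := fun n => dd n + Sseq V (S n)) (l := 0 + Sinf).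
  intro n; unfold dd; ring. ring.
  apply cl_plus. eapply summable_ext; [|exact dd_summable]. intro; simpl; ring. apply cl_SS.
Qed.

Definition term n j := / (useq (n + j) * useq (n + j + 1)).
Definition Tser n := Series (term n).

Lemma term_bound n j : 0 < term n j <= q ^ j.
Proof.
  unfold term. pose proof (u_pos (n + j)). pose proof (u_pos (n + j + 1)).
  destruct (u_mono (n + j)) as [A _]. pose proof (u_growth n j) as G.
  destruct (u_mono (S n)) as [A1 _]. pose proof HC.
  replace (S n + j)%nat with (n + j + 1)%nat in G by lia.
  split. apply Rinv_0_lt_compat; nra.
  rewrite <- Rinv_pow by lra. apply Rinv_le_contravar. apply pow_lt; lra.
  assert (0 < (1 + C) ^ j) by (apply pow_lt; lra). nra.
Qed.

Lemma term_ex n : ex_series (term n).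
Proof.
  apply (@ex_series_le R_AbsRing R_CompleteNormedModule) with (b := fun j => q ^ j).
  intro j. change (norm (term n j)) with (Rabs (term n j)). destruct (term_bound n j). rewrite Rabs_pos_eq; lra.
  apply ex_series_geom. rewrite Rabs_pos_eq; destruct q_bounds; lra.
Qed.

Lemma T_rec n : Tser n = / (useq n * useq (S n)) + Tser (S n).
Proof.
  unfold Tser. rewrite Series_incr_1 by apply term_ex. f_equal.
  unfold term. rewrite Nat.add_0_r, Nat.add_1_r. reflexivity.
  apply Series_ext. intro j. unfold term. f_equal. f_equal; f_equal; lia.
Qed.

Definition ww n := useq n * Tser n.

Lemma ww_rec n : (1 <= n)%nat -> - ww (n + 1)%nat - ww (n - 1)%nat + (2 + V n) * ww n = 0.
Proof.
  intro Hn. destruct n as [|m]. lia. unfold ww.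
  replace (S m + 1)%nat with (S (S m)) by lia. replace (S m - 1)%nat with m by lia.
  pose proof (T_rec m) as E1. pose proof (T_rec (S m)) as E2.
  pose proof (u_pos m). pose proof (u_pos (S m)). pose proof (u_pos (S (S m))).
  replace (Tser (S (S m))) with (Tser (S m) - / (useq (S m) * useq (S (S m)))) by lra.
  rewrite E1.
  replace ((2 + V (S m)) * (useq (S m) * Tser (S m))) with ((useq (S (S m)) + useq m) * Tser (S m)) by (rewrite u_rec; ring).
  field. split; lra.
Qed.

Definition yy n := useq n * useq n * Tser n.

Lemma yy_rec n : yy n = / rr n + yy (S n) * / (rr n * rr n).
Proof.
  unfold yy, rr. rewrite T_rec. pose proof (u_pos n). pose proof (u_pos (S n)). field. lra.
Qed.

Lemma yy_bound n : 0 <= yy (S n) <= / (1 - q).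
Proof.
  pose proof q_bounds. pose proof (u_pos (S n)).
  unfold yy, Tser. split.
  - apply Rmult_le_pos. nra. replace 0 with (0 * Series (term (S n))) by ring. rewrite <- Series_scal_l.
    apply Series_le. intro j. destruct (term_bound (S n) j). lra. apply term_ex.
  - rewrite <- Series_scal_l.
  - rewrite <- (is_series_unique _ _ (is_series_geom q ltac:(rewrite Rabs_pos_eq; lra))).
    apply Series_le. 2: apply ex_series_geom; rewrite Rabs_pos_eq; lra.
    intro j. destruct (term_bound (S n) j). split. nra.
    unfold term. pose proof (u_growth n j). pose proof (u_pos (S n + j)).
    destruct (u_mono (S n + j)) as [_ [B _]]. pose proof HC.
    assert (0 < (1 + C) ^ j) by (apply pow_lt; lra).
    replace (S n + j + 1)%nat with (S (S n + j)) by lia.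
    rewrite <- Rinv_pow by lra.
    assert (P1 : 1 <= (1 + C) ^ j) by (apply pow_R1_Rle; lra).
    set (u1 := useq (S n)) in *. set (uA := useq (S n + j)) in *. set (uB := useq (S (S n + j))) in *.
    set (P := (1 + C) ^ j) in *.
    assert (uA * uB >= P * u1 * u1).
    { assert (u1 <= uB) by nra. apply Rle_ge.
      apply Rmult_le_compat; nra. }
    apply Rle_trans with (u1 * u1 * / (P * u1 * u1)).
    apply Rmult_le_compat_l. nra. apply Rinv_le_contravar. nra. lra.
    right. field. split; lra.
Qed.


Local Notation ystar := (Sinf / (Sinf * Sinf - 1)).

Lemma Sinf_gt1 : 1 + C / 2 <= Sinf.
Proof. pose proof L_bounds. destruct (S_real L) as [_ Y]; lra. Qed.

Lemma ystar_eq : ystar = / Sinf + ystar * / (Sinf * Sinf).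
Proof. pose proof Sinf_gt1. pose proof HC. field. split; nra. Qed.

Lemma yy_lim : is_lim_seq (fun n => yy (S n)) ystar.
Proof.
  pose proof Sinf_gt1. pose proof HC. pose proof q_bounds.
  assert (ys0 : 0 <= ystar) by (apply Rdiv_le_0_compat; nra).
  assert (Hinv : cl (fun n => / rr (S n)) (/ Sinf)).
  { apply cl_inv with 1; auto. apply cl_rr. lra. intro n. rewrite Rabs_pos_eq; pose proof (rr_ge n); lra. lra. }
  assert (Hinv2 : cl (fun n => / rr (S n) * / rr (S n)) (/ Sinf * / Sinf)) by (apply cl_mult; auto).
  set (eta := fun n => Rabs (/ rr (S n) - / Sinf) + ystar * Rabs (/ rr (S n) * / rr (S n) - / Sinf * / Sinf)).
  assert (Heta : is_lim_seq eta 0).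
  { unfold eta. replace (Finite 0) with (Finite (0 + ystar * 0)) by (f_equal; ring).
    apply is_lim_seq_plus'. apply (proj1 (is_lim_seq_abs_0 (fun n => / rr (S n) - / Sinf))). apply summable_lim0; auto.
    apply is_lim_seq_mult'. apply is_lim_seq_const.
    apply (proj1 (is_lim_seq_abs_0 (fun n => / rr (S n) * / rr (S n) - / Sinf * / Sinf))). apply summable_lim0; auto. }
  assert (He : is_lim_seq (fun n => Rabs (yy (S n) - ystar)) 0).
  { apply contraction_lim with (eta := eta) (E := / (1 - q) + ystar) (th := q * q); auto.
    - intro n. split. apply Rabs_pos. destruct (yy_bound n). apply Rabs_le. lra.
    - split. nra. nra.
    - intro n. rewrite yy_rec. rewrite ystar_eq at 1. unfold eta.
      pose proof (rr_ge n). set (r := rr (S n)) in *. set (ys := Sinf / (Sinf * Sinf - 1)) in *.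
      assert (0 < / r <= q). { split. apply Rinv_0_lt_compat; lra. apply Rinv_le_contravar; lra. }
      replace (/ r + yy (S (S n)) * / (r * r) - (/ Sinf + ys * / (Sinf * Sinf))) with
        ((/ r - / Sinf) + ys * (/ r * / r - / Sinf * / Sinf) + (yy (S (S n)) - ys) * (/ r * / r))
        by (field; split; lra).
      eapply Rle_trans. apply Rabs_triang. eapply Rle_trans. apply Rplus_le_compat_r. apply Rabs_triang.
      rewrite !Rabs_mult, (Rabs_pos_eq ys) by auto. rewrite (Rabs_pos_eq (/ r)) by lra.
      apply Rplus_le_compat_l. rewrite Rmult_comm. apply Rmult_le_compat_r. apply Rabs_pos.
      apply Rmult_le_compat; lra. }
  apply lim_by_bound with (y := fun n => Rabs (yy (S n) - ystar)) (yl := 0) (K := 1); auto.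
  intro n. rewrite Rminus_0_r, Rabs_Rabsolu. lra.
Qed.

Definition gg n := useq (S n) * prodR (fun l => / Sseq V l) (S n).

Lemma gg_rec n : gg (S n) = gg n * (rr (S n) * / Sseq V (S (S n))).
Proof.
  unfold gg, rr. cbn [prodR]. pose proof (u_pos (S n)).
  pose proof (S_ge (S (S n)) ltac:(lia)). pose proof HC. pose proof (S_ge (S n) ltac:(lia)). field. repeat split; lra.
Qed.

Definition lt n := ln (rr (S n)) - ln (Sseq V (S (S n))).

Lemma gg_exp n : gg n = gg O * exp (psum lt n).
Proof.
  induction n. simpl. rewrite exp_0; ring.
  rewrite gg_rec, IHn. cbn [psum]. rewrite exp_plus. unfold lt.
  pose proof (rr_ge n). pose proof (S_ge (S (S n)) ltac:(lia)). pose proof HC.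
  unfold Rminus. rewrite exp_plus, exp_Ropp, !exp_ln by lra. ring.
Qed.

Lemma gg0_pos : 0 < gg O.
Proof.
  unfold gg. simpl. pose proof (S_ge 1 (le_n 1)). pose proof HC.
  assert (0 < / Sseq V 1) by (apply Rinv_0_lt_compat; lra). lra.
Qed.

Lemma lt_summable : summable lt.
Proof.
  eapply summable_le with (K := 1); [|apply (summable_minus _ _ dd_summable part_a)].
  intro k. unfold lt. rewrite Rmult_1_l.
  pose proof (rr_ge k). pose proof (S_ge (S (S k)) ltac:(lia)). pose proof HC.
  eapply Rle_trans. apply (ln_diff_bound _ _ 1); lra. rewrite Rinv_1, Rmult_1_l.
  right. f_equal. unfold dd. replace (k + 2)%nat with (S (S k)) by lia.
  replace (k + 1)%nat with (S k) by lia. ring.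
Qed.

Lemma gg_lim : exists g, 0 < g /\ is_lim_seq gg g.
Proof.
  pose proof lt_summable as Hs. destruct (summable_conv _ Hs) as [l Hl].
  destruct Hs as [B HB].
  assert (Hpb : forall n, Rabs (psum lt n) <= B) by (intro n; eapply Rle_trans; [apply psum_abs_le|apply HB]).
  assert (HlB : Rabs l <= B).
  { apply (is_lim_seq_le (fun n => Rabs (psum lt n)) (fun _ => B) (Rabs l) B); auto.
    apply (is_lim_seq_abs _ l Hl). apply is_lim_seq_const. }
  pose proof gg0_pos.
  exists (gg O * exp l). split. apply Rmult_lt_0_compat; auto. apply exp_pos.
  apply lim_by_bound with (y := psum lt) (yl := l) (K := gg O * exp B); auto.
  intro n. rewrite gg_exp.
  replace (gg O * exp (psum lt n) - gg O * exp l) with (gg O * (exp (psum lt n) - exp l)) by ring.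
  rewrite Rabs_mult, Rabs_pos_eq by lra. rewrite Rmult_assoc. apply Rmult_le_compat_l. lra.
  apply exp_diff_bound. specialize (Hpb n). apply Rabs_le_inv in Hpb; lra. apply Rabs_le_inv in HlB; lra.
Qed.

Lemma hh_lim : exists h, 0 < h /\ is_lim_seq (fun n => useq (S n) * phiM V (S n)) h.
Proof.
  destruct gg_lim as [g [Hg Hgl]]. exists (c * g). split. pose proof c_pos. nra.
  apply is_lim_seq_ext with (u := fun n => zseq V (S n) * gg n).
  intro n. unfold gg, phiM. ring.
  apply is_lim_seq_mult'; auto. apply cl_lim. apply cl_shift, z_cl.
Qed.

Lemma phiM_pos n : 0 < phiM V n.
Proof.
  destruct z_lb as [zmin [Hz0 Hz]]. unfold phiM. apply Rmult_lt_0_compat. pose proof (Hz n); lra.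
  apply prodR_pos. intros k Hk. pose proof (S_ge k Hk). pose proof HC. apply Rinv_0_lt_compat; lra.
Qed.

Lemma phiM_bound : exists Z, forall k, Rabs (phiM V k) <= Z.
Proof.
  destruct z_ub as [Z HZ]. exists Z. intro k. unfold phiM.
  destruct (S_ratio 0 k ltac:(lia)) as [A B]. simpl in A, B. rewrite Rmult_1_l in A, B.
  rewrite Rabs_mult, (Rabs_pos_eq (prodR _ k)) by lra.
  pose proof (HZ k). pose proof (Rabs_pos (zseq V k)).
  apply Rle_trans with (Rabs (zseq V k) * 1). apply Rmult_le_compat_l; lra. lra.
Qed.

Theorem part_e2 : exists psi r : nat -> R,
     (forall n : nat, (1 <= n)%nat ->
        - psi (n + 1)%nat - psi (n - 1)%nat + (2 + V n) * psi n = 0) /\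
     is_lim_seq r 0 /\
     (forall n : nat, (1 <= n)%nat ->
        psi n = phiM V n + r n * maxtail (phiM V) n).
Proof.
  destruct hh_lim as [h [Hh Hhl]].
  pose proof Sinf_gt1. pose proof HC.
  assert (ys0 : 0 < ystar) by (apply Rdiv_lt_0_compat; nra).
  set (kap := ystar / h).
  assert (Hk : 0 < kap) by (apply Rdiv_lt_0_compat; auto).
  set (psi := fun n => ww n / kap).
  destruct phiM_bound as [Z HZ].
  assert (Hmt : forall n, Rabs (phiM V n) <= maxtail (phiM V) n) by (intro n; apply (maxtail_ge _ Z); auto).
  set (rs := fun n => (psi n - phiM V n) / maxtail (phiM V) n).
  exists psi, rs. split; [|split].
  - intros n Hn. unfold psi. pose proof (ww_rec n Hn).
    replace (- (ww (n + 1)%nat / kap) - ww (n - 1)%nat / kap + (2 + V n) * (ww n / kap))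
      with ((- ww (n + 1)%nat - ww (n - 1)%nat + (2 + V n) * ww n) / kap) by (field; lra).
    rewrite H1. unfold Rdiv; ring.
  - assert (Hrho : is_lim_seq (fun n => psi (S n) / phiM V (S n)) 1).
    { apply is_lim_seq_ext with (u := fun n => yy (S n) / (useq (S n) * phiM V (S n)) / kap).
      intro n. unfold psi, ww, yy. pose proof (u_pos (S n)). pose proof (phiM_pos (S n)). field. repeat split; lra.
      replace (Finite 1) with (Finite (ystar / h / kap)) by (f_equal; unfold kap; set (ys := Sinf / (Sinf * Sinf - 1)) in *; field; split; lra).
      apply is_lim_seq_div'. apply is_lim_seq_div'; auto. apply yy_lim. lra. apply is_lim_seq_const. lra. }
    apply is_lim_seq_incr_1.
    apply lim_by_bound with (y := fun n => psi (S n) / phiM V (S n)) (yl := 1) (K := 1); auto.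
    intro n. unfold rs. rewrite Rminus_0_r, Rmult_1_l. pose proof (phiM_pos (S n)) as Hp.
    pose proof (Hmt (S n)) as Hm. rewrite Rabs_pos_eq in Hm by lra.
    replace (psi (S n) / phiM V (S n) - 1) with ((psi (S n) - phiM V (S n)) / phiM V (S n)) by (field; lra).
    unfold Rdiv. rewrite !Rabs_mult. apply Rmult_le_compat_l. apply Rabs_pos.
    rewrite !Rabs_Rinv by lra. rewrite !Rabs_pos_eq by lra. apply Rinv_le_contravar; lra.
  - intros n _. unfold rs. pose proof (phiM_pos n). pose proof (Hmt n) as Hq. rewrite Rabs_pos_eq in Hq by lra.
    field. lra.
Qed.

Theorem part_all :
  ex_series (fun n : nat => Rabs (Sseq V (n + 2) - Sseq V (n + 1))) /\
  (is_lim_seq V (Vinf V) /\ Vinf V <> 0 /\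
   exists p : R, is_lim_seq (Cz_partial V) p /\ p <> 0) /\
  (forall n : nat, (1 <= n)%nat ->
     zseq V n * zseq V (n + 1) = 1 / sqrt (V (n + 1)%nat * (V (n + 1)%nat + 4))) /\
  ex_series (fun m : nat =>
     Rabs (zseq V (m + 1) - Rpower (Vinf V * (Vinf V + 4)) (- (1 / 4)))) /\
  is_lim_seq (fun n : nat => Vtilde V (n + 1)) (Vinf V) /\
  (exists M : R, forall m n : nat, (1 <= m)%nat -> (1 <= n)%nat ->
     Rabs (phiP V (Nat.min m n) * phiM V (Nat.max m n)) <= M) /\
  (exists M : R, forall n : nat, (1 <= n)%nat -> Rabs (phiP V n * phiM V n) <= M) /\
  ex_series (fun n : nat => Rabs (Vtilde V (n + 1) - V (n + 1)%nat)) /\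
  (exists psi r : nat -> R,
     (forall n : nat, (1 <= n)%nat ->
        - psi (n + 1)%nat - psi (n - 1)%nat + (2 + V n) * psi n = 0) /\
     is_lim_seq r 0 /\
     (forall n : nat, (1 <= n)%nat ->
        psi n = phiM V n + r n * maxtail (phiM V) n)).
Proof.
  split. apply summable_ex_series, part_a.
  split. split. apply V_lim. split. pose proof L_bounds; pose proof HC; lra.
  exists pinf. destruct P_facts as [A [_ [B _]]]. split; auto; lra.
  split. apply part_c1.
  split. apply summable_ex_series, part_c2.
  split. apply part_d1.
  split. apply part_d2.
  split. apply part_d3.
  split. apply summable_ex_series, part_e1.
  apply part_e2.
Qed.

End Main.

Theorem theorem5 (V : nat -> R) (C : R) :
  0 < C ->
  (forall n : nat, (1 <= n)%nat -> C <= V n) ->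
  (exists M : R, forall n : nat, (1 <= n)%nat -> Rabs (V n) <= M) ->
  ex_series (fun n : nat => Rabs (INR n * (V (n + 1)%nat - V n))) ->
  (* (a) *)
  ex_series (fun n : nat => Rabs (Sseq V (n + 2) - Sseq V (n + 1))) /\
  (* (b) *)
  (is_lim_seq V (Vinf V) /\ Vinf V <> 0 /\
   exists p : R, is_lim_seq (Cz_partial V) p /\ p <> 0) /\
  (* (c) *)
  (forall n : nat, (1 <= n)%nat ->
     zseq V n * zseq V (n + 1) = 1 / sqrt (V (n + 1)%nat * (V (n + 1)%nat + 4))) /\
  ex_series (fun m : nat =>
     Rabs (zseq V (m + 1) - Rpower (Vinf V * (Vinf V + 4)) (- (1 / 4)))) /\
  (* (d) *)
  is_lim_seq (fun n : nat => Vtilde V (n + 1)) (Vinf V) /\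
  (exists M : R, forall m n : nat, (1 <= m)%nat -> (1 <= n)%nat ->
     Rabs (phiP V (Nat.min m n) * phiM V (Nat.max m n)) <= M) /\
  (exists M : R, forall n : nat, (1 <= n)%nat -> Rabs (phiP V n * phiM V n) <= M) /\
  (* (e) *)
  ex_series (fun n : nat => Rabs (Vtilde V (n + 1) - V (n + 1)%nat)) /\
  (exists psi r : nat -> R,
     (forall n : nat, (1 <= n)%nat ->
        - psi (n + 1)%nat - psi (n - 1)%nat + (2 + V n) * psi n = 0) /\
     is_lim_seq r 0 /\
     (forall n : nat, (1 <= n)%nat ->
        psi n = phiM V n + r n * maxtail (phiM V) n)).
Proof.
  intros HC HV [M HM] Hs.
  apply ex_series_summable in Hs.
  eapply part_all; eauto.
Qed.
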